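(* For every disjunctive program $P$ the following are equivalent: (1) $P$ is finitely recursive; (2) $P$ has a smooth splitting sequence of length $\mu\le\omega$.
   Context: A disjunctive program is a set of rules $A_1\vee\dots\vee A_m\leftarrow L_1,\dots,L_n$ ($m>0$, $n\ge0$), $A_j$ atoms, $L_i$ atoms or negated atoms $\mathtt{not}\,A$, possibly with function symbols; $head(r)=\{A_1,\dots,A_m\}$; $\mathsf{Ground}(P)$ is its ground instantiation and $\mathit{atom}(r)$, $\mathit{atom}(\mathsf{Ground}(P))$ denote the sets of ground atoms occurring in $r$, resp. in $\mathsf{Ground}(P)$. The dependency graph of $P$ has ground atoms as vertices and an edge $A\to B$ whenever for some $r\in\mathsf{Ground}(P)$, $A\in head(r)$ and $B$ occurs in $r$ (body, positive or negated, or head). $A$ depends on $B$ if there is a directed path from $A$ to $B$ (every atom depends on itself). $P$ is finitely recursive iff every ground atom depends on finitely many ground atoms. A splitting set of $P$ is a set $U$ of ground atoms such that for all $r\in\mathsf{Ground}(P)$, $head(r)\cap U\ne\emptyset$ implies $\mathit{atom}(r)\subseteq U$. A (transfinite) sequence is a family indexed by $\{\alpha:\alpha<\mu\}$ for an ordinal $\mu$ (its length). A splitting sequence for $P$ is a sequence $\langle U_\alpha\rangle_{\alpha<\mu}$ of splitting sets of $P$ that is monotone ($U_\alpha\subseteq U_\beta$ for $\alpha<\beta$), continuous ($U_\lambda=\bigcup_{\nu<\lambda}U_\nu$ for limit $\lambda<\mu$), and satisfies $\bigcup_{\alpha<\mu}U_\alpha=\mathit{atom}(\mathsf{Ground}(P))$.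 A sequence $\langle X_\alpha\rangle_{\alpha<\mu}$ is smooth iff $X_0$ is finite and $X_{\alpha+1}\setminus X_\alpha$ is finite for every $\alpha+1<\mu$. *)

(* Defs.v *)
From Stdlib Require Import List Relations.
Import ListNotations.

(* Terms over a countable vocabulary: variables and function symbols are
   indexed by nat; a function symbol is identified by its name together with
   the number of arguments it is applied to (constants have arity 0). *)
Inductive term : Type :=
| Var : nat -> term
| Fn  : nat -> list term -> term.

Record atom : Type := mkAtom { pred_sym : nat ; args : list term }.

Inductive literal : Type :=
| Pos : atom -> literal
| Neg : atom -> literal.

Definition lit_atom (l : literal) : atom :=
  match l with Pos a => a | Neg a => a end.

(* A1 v ... v Am <- L1, ..., Ln *)
Record rule : Type := mkRule { head : list atom ; body : list literal }.

Definition program := rule -> Prop.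

Definition disjunctive_program (P : program) : Prop :=
  forall r, P r -> head r <> [].

Definition atom_of_rule (r : rule) (A : atom) : Prop :=
  In A (head r) \/ exists l, In l (body r) /\ lit_atom l = A.

Inductive sym_in_term (f n : nat) : term -> Prop :=
| sit_here : forall ts, length ts = n -> sym_in_term f n (Fn f ts)
| sit_deep : forall g ts t, In t ts -> sym_in_term f n t -> sym_in_term f n (Fn g ts).

Definition sym_in_program (P : program) (f n : nat) : Prop :=
  exists r A t, P r /\ atom_of_rule r A /\ In t (args A) /\ sym_in_term f n t.

(* Herbrand universe of P: ground terms built from the function symbols of P;
   if P has no constant, an arbitrary constant (here Fn 0 []) is added. *)
Inductive hterm (P : program) : term -> Prop :=
| ht_fn : forall f ts, sym_in_program P f (length ts) ->
            Forall (hterm P) ts -> hterm P (Fn f ts)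
| ht_dflt : ~ (exists c, sym_in_program P c 0) -> hterm P (Fn 0 []).

Fixpoint subst (s : nat -> term) (t : term) : term :=
  match t with
  | Var v => s v
  | Fn f ts => Fn f (map (subst s) ts)
  end.

Definition subst_atom (s : nat -> term) (A : atom) : atom :=
  mkAtom (pred_sym A) (map (subst s) (args A)).

Definition subst_lit (s : nat -> term) (l : literal) : literal :=
  match l with Pos a => Pos (subst_atom s a) | Neg a => Neg (subst_atom s a) end.

Definition subst_rule (s : nat -> term) (r : rule) : rule :=
  mkRule (map (subst_atom s) (head r)) (map (subst_lit s) (body r)).

Definition Ground (P : program) : program :=
  fun r' => exists r s, P r /\ (forall v, hterm P (s v)) /\ r' = subst_rule s r.

Definition atom_Ground (P : program) (A : atom) : Prop :=
  exists r, Ground P r /\ atom_of_rule r A.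

Inductive ground_term : term -> Prop :=
| gt_fn : forall f ts, Forall ground_term ts -> ground_term (Fn f ts).

Definition ground_atom (A : atom) : Prop := Forall ground_term (args A).

Definition dep_edge (P : program) (A B : atom) : Prop :=
  exists r, Ground P r /\ In A (head r) /\ atom_of_rule r B.

Definition depends_on (P : program) : relation atom :=
  clos_refl_trans atom (dep_edge P).

Definition finite_set {T : Type} (X : T -> Prop) : Prop :=
  exists l : list T, forall x, X x -> In x l.

Definition finitely_recursive (P : program) : Prop :=
  forall A, ground_atom A -> finite_set (fun B => depends_on P A B).

Definition splitting_set (P : program) (U : atom -> Prop) : Prop :=
  forall r, Ground P r ->
    (exists A, In A (head r) /\ U A) -> forall B, atom_of_rule r B -> U B.

(* A length mu <= omega: [None] is omega, [Some n] is the finite ordinal n. *)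
Definition length_le_omega := option nat.

Definition below (mu : length_le_omega) (i : nat) : Prop :=
  match mu with None => True | Some n => i < n end.

(* A splitting sequence <U_i>_{i<mu}.  Continuity is vacuous, since there
   is no (nonzero) limit ordinal < mu <= omega. *)
Definition splitting_sequence (P : program) (mu : length_le_omega)
    (U : nat -> atom -> Prop) : Prop :=
  (forall i, below mu i -> splitting_set P (U i)) /\
  (forall i j, below mu i -> below mu j -> i < j -> forall A, U i A -> U j A) /\
  (forall A, (exists i, below mu i /\ U i A) <-> atom_Ground P A).

Definition smooth (mu : length_le_omega) (X : nat -> atom -> Prop) : Prop :=
  (below mu 0 -> finite_set (X 0)) /\
  (forall i, below mu (S i) -> finite_set (fun A => X (S i) A /\ ~ X i A)).

(* Main.v *)
Require Import Defs.
From Stdlib Require Import List Relations Arith Lia Classical Cantor.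
Import ListNotations.

Fixpoint hterm_ground P t (H : hterm P t) : ground_term t :=
  match H with
  | ht_fn _ f ts _ HF => gt_fn f ts
      ((fix go l (F : Forall (hterm P) l) : Forall ground_term l :=
          match F with
          | Forall_nil _ => Forall_nil _
          | Forall_cons _ Hx Fl => Forall_cons _ (hterm_ground P _ Hx) (go _ Fl)
          end) ts HF)
  | ht_dflt _ _ => gt_fn 0 [] (Forall_nil _)
  end.

Fixpoint subst_ground s (Hs : forall v, ground_term (s v)) t : ground_term (subst s t) :=
  match t with
  | Var v => Hs v
  | Fn f ts => gt_fn f _
      ((fix go l : Forall ground_term (map (subst s) l) :=
          match l with
          | [] => Forall_nil _
          | x :: l => Forall_cons _ (subst_ground s Hs x) (go l)
          end) ts)
  end.

Lemma subst_atom_ground s (Hs : forall v, ground_term (s v)) a :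
  ground_atom (subst_atom s a).
Proof.
  unfold ground_atom, subst_atom; simpl. apply Forall_forall.
  intros x Hx. apply in_map_iff in Hx. destruct Hx as [t [<- _]].
  apply subst_ground; auto.
Qed.

Lemma atom_Ground_ground P A : atom_Ground P A -> ground_atom A.
Proof.
  intros [r [[r0 [s [_ [Hs ->]]]] Hat]].
  assert (Hs' : forall v, ground_term (s v)) by (intro v; apply (hterm_ground P), Hs).
  destruct Hat as [Hin | [l [Hin Hl]]]; simpl in *.
  - apply in_map_iff in Hin. destruct Hin as [a [<- _]]. apply subst_atom_ground; auto.
  - apply in_map_iff in Hin. destruct Hin as [l0 [<- _]]. subst.
    destruct l0; simpl; apply subst_atom_ground; auto.
Qed.

Fixpoint code (t : term) : nat :=
  match t with
  | Var v => to_nat (0, v)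
  | Fn f ts => to_nat (S f, (fix cl l := match l with
                                         | [] => 0
                                         | x :: l => S (to_nat (code x, cl l)) end) ts)
  end.

Lemma to_nat_inj p q : to_nat p = to_nat q -> p = q.
Proof. intro H. rewrite <- (cancel_of_to p), <- (cancel_of_to q), H. reflexivity. Qed.

Local Opaque to_nat.
Lemma code_inj : forall t t', code t = code t' -> t = t'.
Proof.
  fix IH 1. intros [v|f ts] [v'|f' ts'] H; unfold code in H; fold code in H; apply to_nat_inj in H;
    inversion H; subst; try reflexivity.
  f_equal; clear H; revert ts ts' H2. fix IHl 1.
  intros [|x l] [|x' l'] Hl; try discriminate; try reflexivity.
  cbv beta iota in Hl.
  apply eq_add_S in Hl. apply to_nat_inj in Hl. injection Hl as Hx Hl.
  rewrite (IH x x' Hx), (IHl l l' Hl). reflexivity.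
Qed.

Definition code_atom (A : atom) : nat := code (Fn (pred_sym A) (args A)).

Lemma code_atom_inj A B : code_atom A = code_atom B -> A = B.
Proof.
  intro H. apply code_inj in H. injection H as H1 H2.
  destruct A, B; simpl in *; subst; reflexivity.
Qed.

Lemma dep_ground P A B : depends_on P A B -> atom_Ground P A -> atom_Ground P B.
Proof.
  induction 1; auto.
  intros _. destruct H as [r [Hr [_ Hb]]]. exists r; auto.
Qed.

Lemma dep_eq_or P A B : depends_on P A B -> A = B \/ atom_Ground P A.
Proof.
  induction 1; auto.
  - right. destruct H as [r [Hr [Hh _]]]. exists r. split; auto. left; auto.
  - destruct IHclos_refl_trans1 as [<- | H1]; auto.
Qed.

Lemma split_closed P U : splitting_set P U ->
  forall x y, depends_on P x y -> U x -> U y.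
Proof.
  intros Hs x y Hd. induction Hd; auto.
  destruct H as [r [Hr [Hh Hb]]]. intro Hx. apply (Hs r Hr); eauto.
Qed.

Lemma below_S mu i : below mu (S i) -> below mu i.
Proof. destruct mu; simpl; auto. lia. Qed.

Theorem corollary3p5 (P : program) :
  disjunctive_program P ->
  (finitely_recursive P <->
   exists (mu : length_le_omega) (U : nat -> atom -> Prop),
     splitting_sequence P mu U /\ smooth mu U).
Proof.
  intros _. split.
  - intro Hfr.
    exists None, (fun i B => exists A, atom_Ground P A /\ code_atom A < i /\ depends_on P A B).
    split; [split; [|split]|split].
    + intros i _ r Hr [A' [Hh [A0 [HA0 [Hc Hd]]]]] B Hb.
      exists A0. repeat split; auto. eapply rt_trans; [exact Hd|].
      apply rt_step. exists r; auto.
    + intros i j _ _ Hij A [A0 [H1 [H2 H3]]]. exists A0. repeat split; auto. lia.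
    + intros A; split.
      * intros [i [_ [A0 [H1 [_ H3]]]]]. eapply dep_ground; eauto.
      * intros HA. exists (S (code_atom A)). split; [exact I|].
        exists A. repeat split; auto. apply rt_refl.
    + intros _. exists []. intros x [A0 [_ [H _]]]. lia.
    + intros i _.
      destruct (classic (exists A, atom_Ground P A /\ code_atom A = i)) as [[A [HA Hc]]|Hn].
      * destruct (Hfr A (atom_Ground_ground P A HA)) as [l Hl].
        exists l. intros B [[A' [H1 [H2 H3]]] Hnot].
        destruct (Nat.eq_dec (code_atom A') i) as [E|E].
        -- assert (A' = A) by (apply code_atom_inj; congruence). subst. auto.
        -- exfalso. apply Hnot. exists A'. repeat split; auto. lia.
      * exists []. intros B [[A' [H1 [H2 H3]]] Hnot].
        destruct (Nat.eq_dec (code_atom A') i) as [E|E].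
        -- exfalso. apply Hn. eauto.
        -- exfalso. apply Hnot. exists A'. repeat split; auto. lia.
  - intros [mu [U [[Hsp [Hmon Hun]] [Hs0 HsS]]]] A HA.
    destruct (classic (atom_Ground P A)) as [HG|HG].
    + apply Hun in HG. destruct HG as [i [Hi HUi]].
      assert (Hfin : forall k, below mu k -> finite_set (U k)).
      { induction k; intro Hk; auto.
        destruct (IHk (below_S _ _ Hk)) as [l1 Hl1].
        destruct (HsS k Hk) as [l2 Hl2].
        exists (l1 ++ l2). intros x Hx. apply in_or_app.
        destruct (classic (U k x)); auto. }
      destruct (Hfin i Hi) as [l Hl]. exists l. intros B HB.
      apply Hl. eapply split_closed; eauto.
    + exists [A]. intros B HB. destruct (dep_eq_or P A B HB) as [<-|H]; [left; auto|tauto].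
Qed.
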